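(* Let $r,K,\alpha,\phi,c,m_1,m_2,\lambda,a,d,\delta,\gamma,\sigma,\eta$ be positive constants with $\phi<1$ and $m_1>m_2$, and consider the system \[ \begin{cases} \dot X = rX\left(1-\frac{X}{K}\right)-\frac{\alpha XS}{c+X}-\frac{\phi\alpha XI}{c+X},\\[1mm] \dot S = \frac{m_1\alpha XS}{c+X}-\frac{\lambda AS}{a+A}-dS,\\[1mm] \dot I = \frac{m_2\phi\alpha XI}{c+X}+\frac{\lambda AS}{a+A}-(d+\delta)I,\\[1mm] \dot A = \gamma+\sigma(S+I)-\eta A. \end{cases} \] Assume $d+\delta<\frac{m_2\phi\alpha K}{c+K}$, and let $E_2=(\bar X,0,\bar I,\bar A)$ be the susceptible-pest-free equilibrium, where \[ \bar X=\frac{c(d+\delta)}{m_2\phi\alpha-(d+\delta)},\qquad \bar I=\frac{r(c+\bar X)(K-\bar X)}{\phi\alpha K},\qquad \bar A=\frac{\gamma+\sigma\bar I}{\eta}. \] Then $E_2$ is locally asymptotically stable if \[ \frac{m_1(d+\delta)(a+\bar A)}{(a+\bar A)(\lambda+d)-\lambda a}<m_2\phi<\frac{(K+c)(d+\delta)}{\alpha(K-c)}. \]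
   Context: The assumption $d+\delta<\frac{m_2\phi\alpha K}{c+K}$ is the paper's condition for existence of $E_2$ (equivalently $0<\bar X<K$). *)

(* Defs.v *)
From Stdlib Require Import Reals.
From Coquelicot Require Import Coquelicot.
Open Scope R_scope.

Record params := mkParams {
  p_r : R; p_K : R; p_alpha : R; p_phi : R; p_c : R; p_m1 : R; p_m2 : R;
  p_lambda : R; p_a : R; p_d : R; p_delta : R; p_gamma : R; p_sigma : R;
  p_eta : R }.

Definition fX (p : params) (X S I A : R) : R :=
  p_r p * X * (1 - X / p_K p) - p_alpha p * X * S / (p_c p + X)
  - p_phi p * p_alpha p * X * I / (p_c p + X).

Definition fS (p : params) (X S I A : R) : R :=
  p_m1 p * p_alpha p * X * S / (p_c p + X) - p_lambda p * A * S / (p_a p + A)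
  - p_d p * S.

Definition fI (p : params) (X S I A : R) : R :=
  p_m2 p * p_phi p * p_alpha p * X * I / (p_c p + X)
  + p_lambda p * A * S / (p_a p + A) - (p_d p + p_delta p) * I.

Definition fA (p : params) (X S I A : R) : R :=
  p_gamma p + p_sigma p * (S + I) - p_eta p * A.

Definition right_cont0 (f : R -> R) : Prop :=
  forall eps, 0 < eps -> exists del, 0 < del /\
    forall t, 0 <= t < del -> Rabs (f t - f 0) < eps.

Definition is_solution (p : params) (X S I A : R -> R) : Prop :=
  (forall t, 0 < t ->
     is_derive X t (fX p (X t) (S t) (I t) (A t)) /\
     is_derive S t (fS p (X t) (S t) (I t) (A t)) /\
     is_derive I t (fI p (X t) (S t) (I t) (A t)) /\
     is_derive A t (fA p (X t) (S t) (I t) (A t))) /\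
  right_cont0 X /\ right_cont0 S /\ right_cont0 I /\ right_cont0 A.

Definition dist4 (x1 x2 x3 x4 y1 y2 y3 y4 : R) : R :=
  sqrt ((x1 - y1)^2 + (x2 - y2)^2 + (x3 - y3)^2 + (x4 - y4)^2).

Definition loc_asymp_stable (p : params) (e1 e2 e3 e4 : R) : Prop :=
  (forall eps, 0 < eps -> exists del, 0 < del /\
     forall X S I A, is_solution p X S I A ->
       dist4 (X 0) (S 0) (I 0) (A 0) e1 e2 e3 e4 < del ->
       forall t, 0 <= t -> dist4 (X t) (S t) (I t) (A t) e1 e2 e3 e4 < eps) /\
  (exists del, 0 < del /\
     forall X S I A, is_solution p X S I A ->
       dist4 (X 0) (S 0) (I 0) (A 0) e1 e2 e3 e4 < del ->
       is_lim X p_infty e1 /\ is_lim S p_infty e2 /\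
       is_lim I p_infty e3 /\ is_lim A p_infty e4).

Definition Xbar (p : params) : R :=
  p_c p * (p_d p + p_delta p) / (p_m2 p * p_phi p * p_alpha p - (p_d p + p_delta p)).
Definition Ibar (p : params) : R :=
  p_r p * (p_c p + Xbar p) * (p_K p - Xbar p) / (p_phi p * p_alpha p * p_K p).
Definition Abar (p : params) : R :=
  (p_gamma p + p_sigma p * Ibar p) / p_eta p.

(* Main.v *)
Require Import Defs.
From Stdlib Require Import Reals Lra Psatz.
From Coquelicot Require Import Coquelicot.
Open Scope R_scope.

Lemma rc_const (k : R) : right_cont0 (fun _ => k).
Proof. intros eps He; exists 1; split; [lra|]; intros t _. unfold Rminus; rewrite Rplus_opp_r, Rabs_R0; lra. Qed.

Lemma rc_plus f g : right_cont0 f -> right_cont0 g -> right_cont0 (fun t => f t + g t).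
Proof.
  intros Hf Hg eps He.
  destruct (Hf (eps/2)) as [d1 [Hd1 H1]]; [lra|].
  destruct (Hg (eps/2)) as [d2 [Hd2 H2]]; [lra|].
  exists (Rmin d1 d2); split; [apply Rmin_glb_lt; lra|].
  intros t Ht. assert (t < d1) by (eapply Rlt_le_trans; [apply Ht| apply Rmin_l]).
  assert (t < d2) by (eapply Rlt_le_trans; [apply Ht| apply Rmin_r]).
  specialize (H1 t ltac:(lra)). specialize (H2 t ltac:(lra)).
  replace (f t + g t - (f 0 + g 0)) with ((f t - f 0) + (g t - g 0)) by ring.
  eapply Rle_lt_trans; [apply Rabs_triang|]. lra.
Qed.

Lemma rc_mult f g : right_cont0 f -> right_cont0 g -> right_cont0 (fun t => f t * g t).
Proof.
  intros Hf Hg eps He.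
  set (A := Rabs (f 0) + 1). set (B := Rabs (g 0) + 1).
  assert (HA : 0 < A) by (unfold A; pose proof (Rabs_pos (f 0)); lra).
  assert (HB : 0 < B) by (unfold B; pose proof (Rabs_pos (g 0)); lra).
  destruct (Hf (Rmin 1 (eps/(2*B)))) as [d1 [Hd1 H1]].
  { apply Rmin_glb_lt; [lra|]. apply Rdiv_lt_0_compat; lra. }
  destruct (Hg (eps/(2*A))) as [d2 [Hd2 H2]].
  { apply Rdiv_lt_0_compat; lra. }
  exists (Rmin d1 d2); split; [apply Rmin_glb_lt; lra|].
  intros t Ht. assert (t < d1) by (eapply Rlt_le_trans; [apply Ht| apply Rmin_l]).
  assert (t < d2) by (eapply Rlt_le_trans; [apply Ht| apply Rmin_r]).
  specialize (H1 t ltac:(lra)). specialize (H2 t ltac:(lra)).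
  assert (E1 : Rabs (f t - f 0) < 1) by (eapply Rlt_le_trans; [apply H1|apply Rmin_l]).
  assert (E2 : Rabs (f t - f 0) < eps/(2*B)) by (eapply Rlt_le_trans; [apply H1|apply Rmin_r]).
  replace (f t * g t - f 0 * g 0) with ((f t - f 0) * g 0 + f t * (g t - g 0)) by ring.
  eapply Rle_lt_trans; [apply Rabs_triang|]. rewrite !Rabs_mult.
  assert (Hft : Rabs (f t) <= A).
  { unfold A. replace (f t) with ((f t - f 0) + f 0) by ring.
    eapply Rle_trans; [apply Rabs_triang|]. lra. }
  assert (X1 : Rabs (f t - f 0) * Rabs (g 0) <= eps/(2*B) * Rabs (g 0)).
  { apply Rmult_le_compat_r; [apply Rabs_pos|lra]. }
  assert (X2 : eps/(2*B) * Rabs (g 0) < eps/2).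
  { unfold B in *. apply Rmult_lt_reg_r with (2*(Rabs (g 0) + 1)); [lra|].
    field_simplify; [|lra]. pose proof (Rabs_pos (g 0)). nra. }
  assert (X3 : Rabs (f t) * Rabs (g t - g 0) <= A * (eps/(2*A))).
  { apply Rmult_le_compat; try apply Rabs_pos; lra. }
  assert (X4 : A * (eps/(2*A)) = eps/2) by (field; lra).
  lra.
Qed.

Lemma cont_eps (f : R -> R) x0 : continuous f x0 ->
  forall e, 0 < e -> exists d, 0 < d /\ forall x, Rabs (x - x0) < d -> Rabs (f x - f x0) < e.
Proof.
  intros Hc e He.
  apply continuity_pt_filterlim in Hc. rewrite continuity_pt_locally in Hc.
  destruct (Hc (mkposreal e He)) as [d Hd].
  exists d; split; [apply cond_pos|]. intros x Hx. apply (Hd x). exact Hx.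
Qed.

Lemma d_mul f g x df dg : is_derive f x df -> is_derive g x dg ->
  is_derive (fun t => f t * g t) x (df * g x + f x * dg).
Proof. intros Hf Hg. exact (is_derive_mult f g x df dg Hf Hg Rmult_comm). Qed.

Lemma rc_exp k : right_cont0 (fun s => exp (k * s)).
Proof.
  intros eps He.
  assert (Hc : continuous (fun s => exp (k * s)) 0).
  { apply (ex_derive_continuous (K:=R_AbsRing) (V:=R_NormedModule)). auto_derive. auto. }
  destruct (cont_eps _ _ Hc eps He) as [d [Hd H]].
  exists d; split; [auto|]. intros t Ht. apply H. rewrite Rminus_0_r, Rabs_right; lra.
Qed.

Lemma is_derive_cont f x df : is_derive f x df ->
  forall e, 0 < e -> exists d, 0 < d /\ forall y, Rabs (y - x) < d -> Rabs (f y - f x) < e.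
Proof. intros H. apply cont_eps. apply (ex_derive_continuous (K:=R_AbsRing) (V:=R_NormedModule)). exists df. exact H. Qed.

Section Dyn.
Variables (v dv : R -> R) (m k : R).
Hypothesis Hk : 0 < k.
Hypothesis Hd : forall t, 0 < t -> is_derive v t (dv t).
Hypothesis Hrc : right_cont0 v.
Hypothesis Hpos : forall t, 0 <= t -> 0 <= v t.
Hypothesis Hdec : forall t, 0 < t -> v t < m -> dv t <= - k * v t.

Lemma stepA T : 0 < T -> (forall s, 0 <= s < T -> v s < m) -> v T <= v 0 * exp (- k * T).
Proof.
  intros HT Hs.
  set (w := fun s => v s * exp (k * s)).
  set (dw := fun s => dv s * exp (k * s) + v s * (k * exp (k * s))).
  assert (Dw : forall s, 0 < s -> is_derive w s (dw s)).
  { intros s Hs0. unfold w, dw. apply (d_mul v (fun s => exp (k*s))); [auto|].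
    auto_derive; [auto| ring]. }
  assert (Mono : forall a, 0 < a < T -> w T <= w a).
  { intros a Ha.
    destruct (MVT_cor2 w dw a T ltac:(lra)) as [c [Hc1 Hc2]].
    { intros c Hc. apply is_derive_Reals. apply Dw. lra. }
    assert (dw c <= 0).
    { unfold dw. specialize (Hdec c ltac:(lra) (Hs c ltac:(lra))).
      pose proof (exp_pos (k*c)). nra. }
    nra. }
  assert (W0 : w T <= w 0).
  { destruct (Rle_or_lt (w T) (w 0)) as [h|h]; [exact h|exfalso].
    assert (Hw : right_cont0 w) by (apply rc_mult; [exact Hrc| apply rc_exp]).
    destruct (Hw (w T - w 0) ltac:(lra)) as [d [Hd0 Hd1]].
    set (a := Rmin (d/2) (T/2)).
    assert (0 < a) by (unfold a; apply Rmin_glb_lt; lra).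
    assert (a <= d/2) by apply Rmin_l. assert (a <= T/2) by apply Rmin_r.
    specialize (Hd1 a ltac:(lra)). specialize (Mono a ltac:(lra)).
    apply Rabs_lt_between in Hd1. lra. }
  unfold w in W0. rewrite Rmult_0_r, exp_0, Rmult_1_r in W0.
  replace (- k * T) with (- (k * T)) by ring. rewrite exp_Ropp.
  pose proof (exp_pos (k*T)).
  apply Rmult_le_reg_r with (exp (k*T)); [lra|].
  rewrite Rmult_assoc, Rinv_l; lra.
Qed.

Lemma dyn : v 0 < m -> forall t, 0 <= t -> v t < m /\ v t <= v 0 * exp (- k * t).
Proof.
  intros H0.
  assert (All : forall t, 0 <= t -> v t < m).
  { intros ts Hts. destruct (Rlt_or_le (v ts) m) as [h|h]; [exact h|exfalso].
    set (E := fun t => 0 <= t <= ts /\ forall s, 0 <= s <= t -> v s < m).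
    assert (Eb : bound E) by (exists ts; intros t [Ht _]; lra).
    assert (Ex : exists x, E x).
    { exists 0. split; [lra|]. intros s Hs. replace s with 0 by lra. exact H0. }
    destruct (completeness E Eb Ex) as [T [HT1 HT2]].
    assert (T0 : 0 <= T) by (apply HT1; destruct Ex; unfold E; split; [lra|]; intros s Hs; replace s with 0 by lra; exact H0).
    assert (Tts : T <= ts) by (apply HT2; intros t [Ht _]; lra).
    assert (Below : forall s, 0 <= s < T -> v s < m).
    { intros s Hs. destruct (Rle_or_lt s s) as [_|]; [|lra].
      assert (~ (forall t, E t -> t <= s)).
      { intro Hc. specialize (HT2 s Hc). lra. }
      apply Classical_Pred_Type.not_all_ex_not in H.
      destruct H as [t Ht]. apply Classical_Prop.imply_to_and in Ht.
      destruct Ht as [[Ht1 Ht2] Ht3]. apply Ht2. lra. }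
    assert (VT : v T < m).
    { destruct (Req_dec T 0) as [->|hT]; [exact H0|].
      pose proof (stepA T ltac:(lra) Below).
      assert (exp (- k * T) <= 1).
      { rewrite <- exp_0. left. apply exp_increasing. nra. }
      pose proof (Hpos 0 ltac:(lra)). nra. }
    assert (Cont : exists d, 0 < d /\ forall s, T <= s < T + d -> v s < m).
    { destruct (Req_dec T 0) as [HT0|hT].
      - destruct (Hrc (m - v 0) ltac:(lra)) as [d [Hd0 Hd1]].
        exists d; split; [auto|]. intros s Hs. specialize (Hd1 s ltac:(lra)).
        apply Rabs_lt_between in Hd1. lra.
      - destruct (is_derive_cont v T (dv T) (Hd T ltac:(lra)) (m - v T) ltac:(lra)) as [d [Hd0 Hd1]].
        exists d; split; [auto|]. intros s Hs. specialize (Hd1 s ltac:(rewrite Rabs_right; lra)).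
        apply Rabs_lt_between in Hd1. lra. }
    destruct Cont as [d [Hd0 Hd1]].
    assert (T < ts) by (destruct (Req_dec T ts); [subst; lra|lra]).
    set (t' := Rmin (T + d/2) ts).
    assert (t' <= T + d/2) by apply Rmin_l. assert (t' <= ts) by apply Rmin_r.
    assert (T < t') by (unfold t'; apply Rmin_glb_lt; lra).
    assert (E t').
    { split; [lra|]. intros s Hs. destruct (Rlt_or_le s T).
      - apply Below; lra.
      - apply Hd1; lra. }
    specialize (HT1 t' H4). lra. }
  intros t Ht. split; [auto|].
  destruct (Req_dec t 0) as [->|hT].
  - rewrite Rmult_0_r, exp_0; lra.
  - apply stepA; [lra|]. intros s Hs; apply All; lra.
Qed.
End Dyn.

Lemma sq_abs_lt u e : 0 < e -> u^2 < e^2 -> Rabs u < e.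
Proof. intros He H. unfold Rabs; destruct (Rcase_abs u); nra. Qed.

Lemma lim_bound f l C k : 0 < k -> 0 <= C ->
  (forall t, 0 <= t -> (f t - l)^2 <= C * exp (- k * t)) -> is_lim f p_infty l.
Proof.
  intros Hk HC H. apply is_lim_spec. intros [eps He]. simpl.
  set (q := eps^2 / (C + 1)).
  assert (Hq : 0 < q) by (unfold q; apply Rdiv_lt_0_compat; nra).
  exists (Rmax 0 (- ln q / k)). intros t Ht.
  assert (t0 : 0 <= t) by (pose proof (Rmax_l 0 (- ln q / k)); lra).
  assert (t1 : - ln q / k < t) by (pose proof (Rmax_r 0 (- ln q / k)); lra).
  assert (E : exp (- k * t) < q).
  { rewrite <- (exp_ln q Hq). apply exp_increasing.
    apply Rmult_lt_compat_r with (r := k) in t1; [|lra].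
    unfold Rdiv in t1. rewrite Rmult_assoc, Rinv_l in t1; lra. }
  apply sq_abs_lt; [lra|].
  specialize (H t t0).
  assert (C * exp (- k * t) <= C * q) by (apply Rmult_le_compat_l; lra).
  assert (C * q < eps^2).
  { unfold q. apply Rmult_lt_reg_r with (C+1); [lra|].
    unfold Rdiv. rewrite Rmult_assoc, (Rmult_assoc (eps^2)), Rinv_l; [|lra]. nra. }
  lra.
Qed.
Lemma abs_le a c : -c <= a <= c -> Rabs a <= c.
Proof. intros. unfold Rabs; destruct Rcase_abs; lra. Qed.
Lemma abs_lt a c : -c < a < c -> Rabs a < c.
Proof. intros. unfold Rabs; destruct Rcase_abs; lra. Qed.
Lemma abs_le_inv a c : Rabs a <= c -> -c <= a <= c.
Proof. unfold Rabs; destruct Rcase_abs; lra. Qed.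
Lemma abs_le_inv' a c : Rabs a < c -> -c < a < c.
Proof. unfold Rabs; destruct Rcase_abs; lra. Qed.


Lemma young P u v a c : 0 < a -> Rabs P <= c -> P*u*v <= a/4*u^2 + c^2/a * v^2.
Proof.
  intros Ha Hc.
  assert (H1 : P*u*v <= c * Rabs u * Rabs v).
  { assert (P*u*v <= Rabs (P*u*v)) by apply Rle_abs.
    rewrite !Rabs_mult in H. pose proof (Rabs_pos u). pose proof (Rabs_pos v).
    pose proof (Rabs_pos P).
    assert (Rabs P * Rabs u * Rabs v <= c * Rabs u * Rabs v).
    { apply Rmult_le_compat_r; [auto|]. apply Rmult_le_compat_r; auto. }
    lra. }
  assert (H2 : 0 <= (a * Rabs u / 2 - c * Rabs v)^2) by apply pow2_ge_0.
  assert (Eu : Rabs u ^2 = u^2) by (unfold Rabs; destruct Rcase_abs; ring).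
  assert (Ev : Rabs v ^2 = v^2) by (unfold Rabs; destruct Rcase_abs; ring).
  assert (H3 : c * Rabs u * Rabs v <= a/4*u^2 + c^2/a*v^2).
  { apply Rmult_le_reg_l with a; [lra|].
    replace (a * (a/4*u^2 + c^2/a*v^2)) with (a^2/4*u^2 + c^2*v^2) by (field; lra).
    rewrite <- Eu, <- Ev. nra. }
  lra.
Qed.

Lemma qform x i s y Pxx Pxi Pii Pxs Pis Pss Pyy Pys Pyi ax ai as_ ay cxi cxs cis cys cyi :
  0 < ax -> 0 < ai -> 0 < as_ -> 0 < ay ->
  Pxx <= -ax -> Pii <= -ai -> Pss <= -as_ -> Pyy <= -ay ->
  Rabs Pxi <= cxi -> Rabs Pxs <= cxs -> Rabs Pis <= cis -> Rabs Pys <= cys -> Rabs Pyi <= cyi ->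
  cxi^2/ax + cyi^2/ay <= ai/2 -> cxs^2/ax + cis^2/ai + cys^2/ay <= as_/2 ->
  Pxx*x^2 + Pxi*x*i + Pii*i^2 + Pxs*x*s + Pis*i*s + Pss*s^2 + Pyy*y^2 + Pys*y*s + Pyi*y*i
  <= -(ax/2)*x^2 - (ai/4)*i^2 - (as_/2)*s^2 - (ay/2)*y^2.
Proof.
  intros. 
  pose proof (young Pxi x i ax cxi H H7).
  pose proof (young Pxs x s ax cxs H H8).
  pose proof (young Pis i s ai cis H0 H9).
  pose proof (young Pys y s ay cys H2 H10).
  pose proof (young Pyi y i ay cyi H2 H11).
  pose proof (pow2_ge_0 x). pose proof (pow2_ge_0 i). pose proof (pow2_ge_0 s). pose proof (pow2_ge_0 y).
  assert (Pxx*x^2 <= -ax*x^2) by (apply Rmult_le_compat_r; lra).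
  assert (Pii*i^2 <= -ai*i^2) by (apply Rmult_le_compat_r; lra).
  assert (Pss*s^2 <= -as_*s^2) by (apply Rmult_le_compat_r; lra).
  assert (Pyy*y^2 <= -ay*y^2) by (apply Rmult_le_compat_r; lra).
  assert ((cxi^2/ax + cyi^2/ay)*i^2 <= ai/2*i^2) by (apply Rmult_le_compat_r; lra).
  assert ((cxs^2/ax + cis^2/ai + cys^2/ay)*s^2 <= as_/2*s^2) by (apply Rmult_le_compat_r; lra).
  nra.
Qed.

Definition Dq e0 b0 eps k mu sg et (A11 B Gg E Ll H x s i y : R) :=
  2*e0*x*(A11*x - B*i - Gg*s) + 2*b0*i*(E*x + Ll*s)
  + 2*eps*((A11*x - B*i - Gg*s)*i + x*(E*x + Ll*s)) + 2*k*H*s^2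
  + 2*mu*y*(sg*s + sg*i - et*y).



Lemma core al b0 e0 be sg et Gm Lm eps tau mu k A11 B Gg E Ll H x s i y :
  0 < al -> 0 < b0 -> 0 < e0 -> 0 < be -> 0 < sg -> 0 < et -> 0 < Gm -> 0 < Lm ->
  0 < eps -> 0 < tau -> 0 < mu -> 0 < k ->
  eps <= al/8 -> eps*144*al <= e0*b0 -> tau <= 1 -> 128*tau <= eps*b0*e0*al ->
  mu*16*sg^2 = eps*b0*et ->
  (2*e0*Gm+2*eps*Lm)^2/(e0*al/2) + (2*b0*Lm+2*eps*Gm)^2/(eps*b0) + eps*b0/8 <= k*be/2 ->
  -3*al/2 <= A11 <= -al/2 -> b0/2 <= B -> Rabs (b0*E - e0*B) <= tau -> E <= 2*e0 ->
  0 <= Gg <= Gm -> 0 <= Ll <= Lm -> H <= -be/2 ->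
  Dq e0 b0 eps k mu sg et A11 B Gg E Ll H x s i y <=
  -(e0*al/4)*x^2 - (eps*b0/4)*i^2 - (k*be/2)*s^2 - (mu*et)*y^2.
Proof.
  intros Hal Hb0 He0 Hbe Hsg Het HGm HLm Heps Htau Hmu Hk E1 E2 E3 E4 E5 E6 C1 C2 C3 C4 C5 C6 C7.
  assert (Hrw : Dq e0 b0 eps k mu sg et A11 B Gg E Ll H x s i y =
    (2*e0*A11 + 2*eps*E)*x^2 + (2*(b0*E - e0*B) + 2*eps*A11)*x*i + (-2*eps*B)*i^2
    + (-2*e0*Gg + 2*eps*Ll)*x*s + (2*b0*Ll - 2*eps*Gg)*i*s + (2*k*H)*s^2
    + (-2*mu*et)*y^2 + (2*mu*sg)*y*s + (2*mu*sg)*y*i) by (unfold Dq; ring).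
  rewrite Hrw.
  assert (Hay : 0 < 2*mu*et) by nra.
  assert (Hyy : (2*mu*sg)^2/(2*mu*et) = eps*b0/8).
  { assert (mu*sg^2 = eps*b0*et/16) by lra.
    replace ((2*mu*sg)^2) with (4*mu*(mu*sg^2)) by ring. rewrite H0. field. lra. }
  pose proof (qform x i s y (2*e0*A11 + 2*eps*E) (2*(b0*E - e0*B) + 2*eps*A11) (-2*eps*B)
     (-2*e0*Gg + 2*eps*Ll) (2*b0*Ll - 2*eps*Gg) (2*k*H) (-2*mu*et) (2*mu*sg) (2*mu*sg)
     (e0*al/2) (eps*b0) (k*be) (2*mu*et) (2*tau + 3*eps*al) (2*e0*Gm+2*eps*Lm)
     (2*b0*Lm+2*eps*Gm) (2*mu*sg) (2*mu*sg)) as Q.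
  assert (R : -(e0*al/2/2)*x^2 - (eps*b0/4)*i^2 - (k*be/2)*s^2 - (2*mu*et/2)*y^2
              = -(e0*al/4)*x^2 - (eps*b0/4)*i^2 - (k*be/2)*s^2 - (mu*et)*y^2) by field.
  rewrite <- R. apply Q; clear Q R Hrw.
  - nra.
  - nra.
  - nra.
  - exact Hay.
  - nra.
  - nra.
  - nra.
  - lra.
  - apply abs_le. apply abs_le_inv in C3. nra.
  - apply abs_le. nra.
  - apply abs_le. nra.
  - apply abs_le. nra.
  - apply abs_le. nra.
  - rewrite Hyy.
    assert (S1 : (2*tau + 3*eps*al)^2 <= 8*tau^2 + 18*eps^2*al^2) by (pose proof (pow2_ge_0 (2*tau - 3*eps*al)); nra).
    assert (S2 : (2*tau + 3*eps*al)^2/(e0*al/2) <= (8*tau^2 + 18*eps^2*al^2)/(e0*al/2)).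
    { apply Rmult_le_compat_r; [|exact S1]. left; apply Rinv_0_lt_compat; nra. }
    assert (S3 : (8*tau^2 + 18*eps^2*al^2)/(e0*al/2) <= 3*eps*b0/8).
    { apply Rmult_le_reg_r with (e0*al/2); [nra|].
      unfold Rdiv at 1. rewrite Rmult_assoc, Rinv_l; [|nra].
      assert (tau^2 <= tau) by nra.
      assert (18*eps^2*al^2 <= eps*al*(e0*b0)/8).
      { assert (eps*al/8*(eps*144*al) <= eps*al/8*(e0*b0)) by (apply Rmult_le_compat_l; nra). nra. }
      nra. }
    lra.
  - rewrite Hyy. nra.
Qed.


Ltac pos := match goal with
 | |- 0 < _ * _ => apply Rmult_lt_0_compat; pos
 | |- 0 < _ / _ => apply Rdiv_lt_0_compat; pos
 | |- 0 < _ + _ => apply Rplus_lt_0_compat; pos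
 | _ => try lra
 end.

Section Model.
Variable p : params.
Local Notation r := (p_r p). Local Notation K := (p_K p). Local Notation al := (p_alpha p).
Local Notation ph := (p_phi p). Local Notation c := (p_c p). Local Notation m1 := (p_m1 p).
Local Notation m2 := (p_m2 p). Local Notation la := (p_lambda p). Local Notation a := (p_a p).
Local Notation d := (p_d p). Local Notation de := (p_delta p). Local Notation ga := (p_gamma p).
Local Notation sg := (p_sigma p). Local Notation et := (p_eta p).
Local Notation Xb := (Xbar p). Local Notation Ib := (Ibar p). Local Notation Ab := (Abar p).
Hypothesis Hr : 0 < r. Hypothesis HK : 0 < K. Hypothesis Hal : 0 < al. Hypothesis Hph : 0 < ph.
Hypothesis Hc : 0 < c. Hypothesis Hm1 : 0 < m1. Hypothesis Hm2 : 0 < m2. Hypothesis Hla : 0 < la.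
Hypothesis Ha : 0 < a. Hypothesis Hd : 0 < d. Hypothesis Hde : 0 < de. Hypothesis Hga : 0 < ga.
Hypothesis Hsg : 0 < sg. Hypothesis Het : 0 < et.
Hypothesis H17 : d + de < m2 * ph * al * K / (c + K).
Hypothesis H18 : m1 * (d + de) * (a + Ab) / ((a + Ab) * (la + d) - la * a) < m2 * ph.
Hypothesis H19 : m2 * ph < (K + c) * (d + de) / (al * (K - c)).

Lemma MD : d + de < m2*ph*al.
Proof.
  apply Rmult_lt_compat_r with (r := c + K) in H17; [|lra].
  unfold Rdiv in H17. rewrite Rmult_assoc, Rinv_l in H17; [|lra]. nra.
Qed.

Lemma Xb_pos : 0 < Xb.
Proof. pose proof MD. unfold Xbar. apply Rdiv_lt_0_compat; nra. Qed.

Lemma Xb_eq : Xb * (m2*ph*al - (d+de)) = c*(d+de).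
Proof. pose proof MD. unfold Xbar. field. lra. Qed.

Lemma Xb_lt_K : Xb < K.
Proof.
  pose proof MD. pose proof Xb_eq.
  apply Rmult_lt_compat_r with (r := c + K) in H17; [|lra].
  unfold Rdiv in H17. rewrite Rmult_assoc, Rinv_l in H17; [|lra]. nra.
Qed.

Lemma K_gt_c : c < K.
Proof.
  destruct (Rlt_or_le c K) as [h|h]; [exact h|exfalso].
  destruct (Req_dec K c) as [e|ne].
  - rewrite e in H19. rewrite Rminus_diag, Rmult_0_r, Rdiv_0_r in H19. nra.
  - assert (al * (K - c) < 0) by nra.
    assert ((K + c) * (d + de) / (al * (K - c)) < 0).
    { unfold Rdiv. apply Rmult_pos_neg; [nra|]. apply Rinv_lt_0_compat; auto. }
    nra.
Qed.

Lemma Xb_big : K - c < 2 * Xb.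
Proof.
  pose proof K_gt_c. pose proof MD. pose proof Xb_eq.
  apply Rmult_lt_compat_r with (r := al * (K - c)) in H19; [|nra].
  assert (E : (K + c) * (d + de) / (al * (K - c)) * (al * (K - c)) = (K+c)*(d+de)) by (field; split; lra).
  rewrite E in H19.
  assert ((K-c)*(m2*ph*al - (d+de)) < 2*Xb*(m2*ph*al - (d+de))) by nra.
  apply Rmult_lt_reg_r with (m2*ph*al - (d+de)); lra.
Qed.

Lemma Ib_pos : 0 < Ib.
Proof.
  pose proof Xb_pos; pose proof Xb_lt_K. unfold Ibar. apply Rdiv_lt_0_compat.
  - apply Rmult_lt_0_compat; [apply Rmult_lt_0_compat|]; lra.
  - apply Rmult_lt_0_compat; [apply Rmult_lt_0_compat|]; lra.
Qed.

Lemma Ab_pos : 0 < Ab.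
Proof. pose proof Ib_pos. unfold Abar. apply Rdiv_lt_0_compat; nra. Qed.

Lemma eq1 : r * (1 - Xb / K) = ph * al * Ib / (c + Xb).
Proof. pose proof Xb_pos. unfold Ibar. field. repeat split; lra. Qed.

Lemma eq2 : m2 * ph * al * Xb / (c + Xb) = d + de.
Proof. pose proof Xb_pos. pose proof Xb_eq. pose proof MD.
  apply Rmult_eq_reg_r with (c + Xb); [|lra]. unfold Rdiv. rewrite Rmult_assoc, Rinv_l; nra. Qed.

Lemma eq3 : ga + sg * Ib = et * Ab.
Proof. unfold Abar. field. lra. Qed.

Definition A11f (X : R) := X * (- r / K + ph * al * Ib / ((c + X) * (c + Xb))).
Definition Bf (X : R) := ph * al * X / (c + X).
Definition Gf (X : R) := al * X / (c + X).
Definition qf (X : R) := m2 * ph * al * c / ((c + X) * (c + Xb)).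
Definition Lf (A : R) := la * A / (a + A).
Definition h1f (X : R) := m1 * al * X / (c + X).

Lemma a0_neg : A11f Xb < 0.
Proof.
  pose proof Xb_pos. pose proof Xb_big. pose proof eq1. unfold A11f.
  assert (E : ph * al * Ib / ((c + Xb) * (c + Xb)) = r * (K - Xb) / (K * (c + Xb))).
  { replace (ph * al * Ib / ((c + Xb) * (c + Xb))) with ((ph * al * Ib / (c + Xb)) / (c+Xb)) by (field; lra).
    rewrite <- H1. field. lra. }
  rewrite E.
  replace (- r / K + r * (K - Xb) / (K * (c + Xb))) with (r * (K - c - 2*Xb) / (K * (c+Xb))) by (field; lra).
  apply Rmult_pos_neg; [lra|]. unfold Rdiv. apply Rmult_neg_pos; [nra|].
  apply Rinv_0_lt_compat; nra.
Qed.

Lemma h0_neg : h1f Xb - Lf Ab - d < 0.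
Proof.
  pose proof Xb_pos. pose proof Ab_pos. pose proof eq2.
  unfold h1f, Lf.
  assert (Den : 0 < (a + Ab) * (la + d) - la * a).
  { replace ((a + Ab) * (la + d) - la * a) with (a*d + Ab*la + Ab*d) by ring.
    repeat apply Rplus_lt_0_compat; apply Rmult_lt_0_compat; lra. }
  apply Rmult_lt_compat_r with (r := (a + Ab) * (la + d) - la * a) in H18; [|lra].
  unfold Rdiv in H18. rewrite Rmult_assoc, Rinv_l in H18; [|lra].
  assert (E : m1 * al * Xb / (c + Xb) = m1 * (d + de) / (m2 * ph)).
  { rewrite <- H1. field. repeat split; lra. }
  rewrite E.
  assert (m1 * (d + de) < m2 * ph * (la * Ab / (a + Ab) + d)).
  { apply Rmult_lt_reg_r with (a + Ab); [lra|].
    replace (m2 * ph * (la * Ab / (a + Ab) + d) * (a + Ab)) with (m2 * ph * ((a + Ab) * (la + d) - la * a)) by (field; lra).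
    nra. }
  assert (m1 * (d + de) / (m2 * ph) < la * Ab / (a + Ab) + d).
  { apply Rmult_lt_reg_r with (m2 * ph); [nra|]. unfold Rdiv at 1.
    rewrite Rmult_assoc, Rinv_l; nra. }
  lra.
Qed.

Lemma fX_eq X S I A : 0 < X ->
  fX p X S I A = A11f X * (X - Xb) - Bf X * (I - Ib) - Gf X * S.
Proof.
  intro HX. pose proof Xb_pos. pose proof eq1.
  unfold fX, A11f, Bf, Gf.
  assert (E : r * X * (1 - X / K) = X * (r * (1 - Xb / K)) - r * X * (X - Xb) / K) by (field; lra).
  rewrite E, H0. field. lra.
Qed.

Lemma fS_eq X S I A : fS p X S I A = (h1f X - Lf A - d) * S.
Proof. unfold fS, h1f, Lf. unfold Rdiv. ring. Qed.

Lemma fI_eq X S I A : 0 < X ->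
  fI p X S I A = (I * qf X) * (X - Xb) + Lf A * S.
Proof.
  intro HX. pose proof Xb_pos. pose proof eq2.
  unfold fI, qf, Lf.
  replace (d + de) with (m2 * ph * al * Xb / (c + Xb)) by exact H0.
  assert (E : m2*ph*al*X*I/(c+X) - (m2*ph*al*Xb/(c+Xb))*I = I*(m2*ph*al*c/((c+X)*(c+Xb)))*(X-Xb)) by (field; lra).
  replace (la*A*S/(a+A)) with (la*A/(a+A)*S) by (unfold Rdiv; ring). lra.
Qed.

Lemma fA_eq X S I A : fA p X S I A = sg * S + sg * (I - Ib) - et * (A - Ab).
Proof. pose proof eq3. unfold fA. lra. Qed.


Lemma contR (f : R -> R) x : ex_derive f x ->
  forall e, 0 < e -> exists d, 0 < d /\ forall y, Rabs (y - x) < d -> Rabs (f y - f x) < e.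
Proof.
  intros H. apply cont_eps. apply (ex_derive_continuous (K:=R_AbsRing) (V:=R_NormedModule)). exact H.
Qed.

Lemma min2 x y : 0 < x -> 0 < y -> exists z, 0 < z /\ z <= x /\ z <= y.
Proof. intros. exists (Rmin x y). split; [apply Rmin_glb_lt; auto|split; [apply Rmin_l|apply Rmin_r]]. Qed.

Lemma region tau : 0 < tau -> exists rho, 0 < rho /\ forall X I A,
  Rabs (X - Xb) < rho -> Rabs (I - Ib) < rho -> Rabs (A - Ab) < rho ->
  0 < X /\ 0 < A /\ 3 * A11f Xb / 2 <= A11f X <= A11f Xb / 2 /\ Bf Xb / 2 <= Bf X /\
  Rabs (Bf Xb * (I * qf X) - (Ib * qf Xb) * Bf X) <= tau /\ I * qf X <= 2 * (Ib * qf Xb) /\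
  0 <= Gf X <= al /\ 0 <= Lf A <= la /\ h1f X - Lf A - d <= (h1f Xb - Lf Ab - d) / 2.
Proof.
  intros Htau.
  pose proof Xb_pos as HXb. pose proof Ab_pos as HAb. pose proof Ib_pos as HIb.
  pose proof a0_neg as Ha0. pose proof h0_neg as Hh0.
  set (b0 := Bf Xb). set (e0 := Ib * qf Xb). set (qm := m2 * ph * al / (c + Xb)).
  assert (Hb0 : 0 < b0) by (unfold b0, Bf; pos).
  assert (Hq0 : 0 < qf Xb) by (unfold qf; apply Rdiv_lt_0_compat; pos).
  assert (He0 : 0 < e0) by (unfold e0; apply Rmult_lt_0_compat; lra).
  assert (Hqm : 0 < qm) by (unfold qm; pos).
  set (etaE := Rmin e0 (tau / (2 * b0))).
  assert (HetaE : 0 < etaE) by (unfold etaE; apply Rmin_glb_lt; [lra| apply Rdiv_lt_0_compat; lra]).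
  assert (etaE1 : etaE <= e0) by apply Rmin_l.
  assert (etaE2 : etaE <= tau / (2 * b0)) by apply Rmin_r.
  destruct (contR A11f Xb ltac:(unfold A11f; auto_derive; repeat split; apply Rgt_not_eq; unfold Rgt; pos) (- A11f Xb / 2) ltac:(lra)) as [d1 [Hd1 C1]].
  destruct (contR Bf Xb ltac:(unfold Bf; auto_derive; repeat split; apply Rgt_not_eq; unfold Rgt; pos) (Rmin (b0/2) (tau / (2 * e0))) ltac:(apply Rmin_glb_lt; [lra|apply Rdiv_lt_0_compat; lra])) as [d2 [Hd2 C2]].
  destruct (contR qf Xb ltac:(unfold qf; auto_derive; repeat split; apply Rgt_not_eq; unfold Rgt; pos) (etaE / (2 * Ib)) ltac:(apply Rdiv_lt_0_compat; lra)) as [d3 [Hd3 C3]].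
  destruct (contR h1f Xb ltac:(unfold h1f; auto_derive; repeat split; apply Rgt_not_eq; unfold Rgt; pos) (- (h1f Xb - Lf Ab - d) / 4) ltac:(lra)) as [d4 [Hd4 C4]].
  destruct (contR Lf Ab ltac:(unfold Lf; auto_derive; repeat split; apply Rgt_not_eq; unfold Rgt; pos) (- (h1f Xb - Lf Ab - d) / 4) ltac:(lra)) as [d5 [Hd5 C5]].
  assert (Hd6 : 0 < etaE / (2 * qm)) by (apply Rdiv_lt_0_compat; lra).
  destruct (min2 _ _ HXb HAb) as [z1 [Hz1 [Z1a Z1b]]].
  destruct (min2 _ _ Hd1 Hd2) as [z2 [Hz2 [Z2a Z2b]]].
  destruct (min2 _ _ Hd3 Hd4) as [z3 [Hz3 [Z3a Z3b]]].
  destruct (min2 _ _ Hd5 Hd6) as [z4 [Hz4 [Z4a Z4b]]].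
  destruct (min2 _ _ Hz1 Hz2) as [z5 [Hz5 [Z5a Z5b]]].
  destruct (min2 _ _ Hz3 Hz4) as [z6 [Hz6 [Z6a Z6b]]].
  destruct (min2 _ _ Hz5 Hz6) as [rho [Hrho [R1 R2]]].
  exists rho; split; [exact Hrho|]. intros X I A HX HI HA.
  apply abs_le_inv' in HX. apply abs_le_inv' in HI. apply abs_le_inv' in HA.
  assert (PX : 0 < X) by lra. assert (PA : 0 < A) by lra.
  specialize (C1 X ltac:(apply abs_lt; lra)). apply abs_le_inv' in C1.
  specialize (C2 X ltac:(apply abs_lt; lra)). apply abs_le_inv' in C2.
  specialize (C3 X ltac:(apply abs_lt; lra)). apply abs_le_inv' in C3.
  specialize (C4 X ltac:(apply abs_lt; lra)). apply abs_le_inv' in C4.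
  specialize (C5 A ltac:(apply abs_lt; lra)). apply abs_le_inv' in C5.
  pose proof (Rmin_l (b0/2) (tau / (2 * e0))). pose proof (Rmin_r (b0/2) (tau / (2 * e0))).
  assert (QX : 0 <= qf X <= qm).
  { unfold qf, qm. split.
    - left. apply Rdiv_lt_0_compat; pos.
    - replace (m2 * ph * al * c / ((c + X) * (c + Xb))) with ((m2 * ph * al / (c + Xb)) * (c / (c + X))) by (field; lra).
      rewrite <- (Rmult_1_r (m2 * ph * al / (c + Xb))) at 2.
      apply Rmult_le_compat_l; [left; pos|].
      apply Rmult_le_reg_r with (c + X); [lra|]. unfold Rdiv; rewrite Rmult_assoc, Rinv_l; lra. }
  assert (EE : Rabs (I * qf X - e0) <= etaE).
  { replace (I * qf X - e0) with ((I - Ib) * qf X + Ib * (qf X - qf Xb)) by (unfold e0; ring).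
    assert (Rabs ((I - Ib) * qf X) <= etaE / 2).
    { rewrite Rabs_mult, (Rabs_right (qf X)) by lra.
      assert (Rabs (I - Ib) <= etaE / (2 * qm)) by (apply abs_le; lra).
      apply Rle_trans with (etaE / (2 * qm) * qm).
      - apply Rmult_le_compat; try lra; apply Rabs_pos.
      - right; field; lra. }
    assert (Rabs (Ib * (qf X - qf Xb)) <= etaE / 2).
    { rewrite Rabs_mult, (Rabs_right Ib) by lra.
      apply Rle_trans with (Ib * (etaE / (2 * Ib))).
      - apply Rmult_le_compat_l; [lra|]. apply abs_le; lra.
      - right; field; lra. }
    eapply Rle_trans; [apply Rabs_triang|]. lra. }
  apply abs_le_inv in EE.
  assert (EB : Rabs (Bf X - b0) <= tau / (2 * e0)) by (apply abs_le; unfold b0 in *; lra).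
  assert (EE2 : Rabs (I * qf X - e0) <= tau / (2 * b0)) by (apply abs_le; lra).
  repeat split; try lra.
  - unfold b0 in *; lra.
  - replace (b0 * (I * qf X) - e0 * Bf X) with (b0 * (I * qf X - e0) - e0 * (Bf X - b0)) by ring.
    eapply Rle_trans; [apply Rabs_triang|]. rewrite Rabs_Ropp, !Rabs_mult, (Rabs_right b0), (Rabs_right e0) by lra.
    assert (b0 * Rabs (I * qf X - e0) <= b0 * (tau / (2 * b0))) by (apply Rmult_le_compat_l; lra).
    assert (e0 * Rabs (Bf X - b0) <= e0 * (tau / (2 * e0))) by (apply Rmult_le_compat_l; lra).
    assert (b0 * (tau / (2 * b0)) + e0 * (tau / (2 * e0)) = tau) by (field; lra).
    lra.
  - unfold Gf; left; pos.
  - unfold Gf. apply Rmult_le_reg_r with (c + X); [lra|]. unfold Rdiv; rewrite Rmult_assoc, Rinv_l; nra.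
  - unfold Lf; left; pos.
  - unfold Lf. apply Rmult_le_reg_r with (a + A); [lra|]. unfold Rdiv; rewrite Rmult_assoc, Rinv_l; nra.
Qed.


Definition Vf (e0 b0 eps kk mu x s i y : R) := e0*(x*x) + b0*(i*i) + 2*eps*(x*i) + kk*(s*s) + mu*(y*y).

Lemma dV e0 b0 eps kk mu (X S I A : R -> R) Xb0 Ib0 Ab0 t dx ds di dy :
  is_derive X t dx -> is_derive S t ds -> is_derive I t di -> is_derive A t dy ->
  is_derive (fun t => Vf e0 b0 eps kk mu (X t - Xb0) (S t) (I t - Ib0) (A t - Ab0)) t
   (2*e0*(X t - Xb0)*dx + 2*b0*(I t - Ib0)*di + 2*eps*(dx*(I t - Ib0) + (X t - Xb0)*di) + 2*kk*S t*ds + 2*mu*(A t - Ab0)*dy).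
Proof.
  intros HX HS HI HA. unfold Vf.
  auto_derive.
  - repeat split; eexists; eassumption.
  - assert (E1 : Derive (fun x => X x) t = dx) by (apply is_derive_unique; exact HX).
    assert (E2 : Derive (fun x => S x) t = ds) by (apply is_derive_unique; exact HS).
    assert (E3 : Derive (fun x => I x) t = di) by (apply is_derive_unique; exact HI).
    assert (E4 : Derive (fun x => A x) t = dy) by (apply is_derive_unique; exact HA).
    rewrite E1, E2, E3, E4. ring.
Qed.

Lemma rc_sub f k : right_cont0 f -> right_cont0 (fun t => f t - k).
Proof.
  intros H eps He. destruct (H eps He) as [dd [Hdd H1]]. exists dd; split; auto.
  intros t Ht. replace (f t - k - (f 0 - k)) with (f t - f 0) by ring. auto.
Qed.

Lemma rc_V e0 b0 eps kk mu x s i y : right_cont0 x -> right_cont0 s -> right_cont0 i -> right_cont0 y ->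
  right_cont0 (fun t => Vf e0 b0 eps kk mu (x t) (s t) (i t) (y t)).
Proof.
  intros. unfold Vf.
  repeat (apply rc_plus || apply rc_mult || apply rc_const || assumption).
Qed.

Lemma V_bounds e0 b0 eps kk mu x s i y : 0 < e0 -> 0 < b0 -> 0 < eps -> eps <= e0/2 -> eps <= b0/2 ->
  0 < kk -> 0 < mu ->
  Rmin (Rmin (e0/2) (b0/2)) (Rmin kk mu) * (x^2 + s^2 + i^2 + y^2) <= Vf e0 b0 eps kk mu x s i y /\
  Vf e0 b0 eps kk mu x s i y <= (3*e0/2 + 3*b0/2 + kk + mu) * (x^2 + s^2 + i^2 + y^2).
Proof.
  intros. set (l := Rmin (Rmin (e0/2) (b0/2)) (Rmin kk mu)).
  assert (l <= e0/2) by (unfold l; eapply Rle_trans; [apply Rmin_l|apply Rmin_l]).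
  assert (l <= b0/2) by (unfold l; eapply Rle_trans; [apply Rmin_l|apply Rmin_r]).
  assert (l <= kk) by (unfold l; eapply Rle_trans; [apply Rmin_r|apply Rmin_l]).
  assert (l <= mu) by (unfold l; eapply Rle_trans; [apply Rmin_r|apply Rmin_r]).
  assert (Hxi : 2*Rabs (x*i) <= x^2 + i^2).
  { rewrite Rabs_mult. pose proof (pow2_ge_0 (Rabs x - Rabs i)).
    assert (Rabs x ^2 = x^2) by (unfold Rabs; destruct Rcase_abs; ring).
    assert (Rabs i ^2 = i^2) by (unfold Rabs; destruct Rcase_abs; ring). nra. }
  pose proof (Rle_abs (x*i)) as Ab1. pose proof (Rle_abs (-(x*i))) as Ab2. rewrite Rabs_Ropp in Ab2.
  pose proof (pow2_ge_0 x). pose proof (pow2_ge_0 i). pose proof (pow2_ge_0 s). pose proof (pow2_ge_0 y).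
  unfold Vf. split; nra.
Qed.

Lemma sq_le_ss a b c0 d0 : a^2 <= a^2 + b^2 + c0^2 + d0^2 /\ b^2 <= a^2 + b^2 + c0^2 + d0^2 /\
  c0^2 <= a^2 + b^2 + c0^2 + d0^2 /\ d0^2 <= a^2 + b^2 + c0^2 + d0^2.
Proof. pose proof (pow2_ge_0 a); pose proof (pow2_ge_0 b); pose proof (pow2_ge_0 c0); pose proof (pow2_ge_0 d0). lra. Qed.

Lemma sq_lt_abs u rho : 0 < rho -> u^2 < rho^2 -> Rabs u < rho.
Proof. intros. unfold Rabs; destruct Rcase_abs; nra. Qed.

Lemma sqrt_lt_sq u dl : 0 < dl -> sqrt u < dl -> u < dl^2.
Proof.
  intros Hdl H. destruct (Rlt_or_le u (dl^2)) as [h|h]; [exact h|exfalso].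
  apply sqrt_le_1_alt in h. rewrite sqrt_pow2 in h; lra.
Qed.

Lemma main : loc_asymp_stable p Xb 0 Ib Ab.
Proof.
  pose proof Xb_pos as HXb. pose proof Ab_pos as HAb. pose proof Ib_pos as HIb.
  pose proof a0_neg as Ha0. pose proof h0_neg as Hh0.
  set (al0 := - A11f Xb). set (b0 := Bf Xb). set (e0 := Ib * qf Xb).
  set (be := - (h1f Xb - Lf Ab - d)).
  assert (Hal0 : 0 < al0) by (unfold al0; lra).
  assert (Hbe : 0 < be) by (unfold be; lra).
  assert (Hb0 : 0 < b0) by (unfold b0, Bf; pos).
  assert (He0 : 0 < e0) by (unfold e0, qf; pos).
  set (eps := Rmin (Rmin (al0/8) (e0*b0/(144*al0))) (Rmin (e0/2) (b0/2))).
  assert (Heps : 0 < eps) by (unfold eps; repeat apply Rmin_glb_lt; pos).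
  assert (eps1 : eps <= al0/8) by (unfold eps; eapply Rle_trans; [apply Rmin_l|apply Rmin_l]).
  assert (eps2 : eps <= e0*b0/(144*al0)) by (unfold eps; eapply Rle_trans; [apply Rmin_l|apply Rmin_r]).
  assert (eps3 : eps <= e0/2) by (unfold eps; eapply Rle_trans; [apply Rmin_r|apply Rmin_l]).
  assert (eps4 : eps <= b0/2) by (unfold eps; eapply Rle_trans; [apply Rmin_r|apply Rmin_r]).
  assert (eps2' : eps*144*al0 <= e0*b0).
  { apply Rmult_le_compat_r with (r := 144*al0) in eps2; [|lra].
    unfold Rdiv in eps2. rewrite Rmult_assoc, Rinv_l in eps2; lra. }
  set (tau := Rmin 1 (eps*b0*e0*al0/128)).
  assert (Htau : 0 < tau) by (unfold tau; apply Rmin_glb_lt; pos).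
  assert (tau1 : tau <= 1) by apply Rmin_l.
  assert (tau2 : 128*tau <= eps*b0*e0*al0) by (pose proof (Rmin_r 1 (eps*b0*e0*al0/128)); unfold tau; lra).
  set (mu := eps*b0*et/(16*sg^2)).
  assert (Hmu : 0 < mu) by (unfold mu; pos; apply pow_lt; lra).
  assert (mu1 : mu*16*sg^2 = eps*b0*et) by (unfold mu; field; lra).
  set (SS := (2*e0*al+2*eps*la)^2/(e0*al0/2) + (2*b0*la+2*eps*al)^2/(eps*b0) + eps*b0/8).
  assert (HSS : 0 < SS).
  { unfold SS. apply Rplus_le_lt_0_compat; [apply Rplus_le_le_0_compat|pos];
    apply Rmult_le_pos; try apply pow2_ge_0; left; apply Rinv_0_lt_compat; pos. }
  set (kk := 2*SS/be).
  assert (Hkk : 0 < kk) by (unfold kk; pos).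
  assert (kk1 : SS <= kk*be/2) by (unfold kk; right; field; lra).
  destruct (region tau Htau) as [rho [Hrho Reg]].
  set (lam := Rmin (Rmin (e0/2) (b0/2)) (Rmin kk mu)).
  set (Lam := 3*e0/2 + 3*b0/2 + kk + mu).
  assert (Hlam : 0 < lam) by (unfold lam; repeat apply Rmin_glb_lt; lra).
  assert (lamLam : lam <= Lam).
  { unfold lam, Lam. pose proof (Rmin_r (Rmin (e0/2) (b0/2)) (Rmin kk mu)).
    pose proof (Rmin_l kk mu). lra. }
  set (cd := Rmin (Rmin (e0*al0/4) (eps*b0/4)) (Rmin (kk*be/2) (mu*et))).
  assert (Hcd : 0 < cd) by (unfold cd; repeat apply Rmin_glb_lt; pos).
  set (kap := cd / Lam).
  assert (Hkap : 0 < kap) by (unfold kap; pos).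
  set (m := lam * rho^2).
  assert (Traj : forall X S I A, is_solution p X S I A ->
     Vf e0 b0 eps kk mu (X 0 - Xb) (S 0) (I 0 - Ib) (A 0 - Ab) < m ->
     forall t, 0 <= t ->
       Vf e0 b0 eps kk mu (X t - Xb) (S t) (I t - Ib) (A t - Ab) <=
       Vf e0 b0 eps kk mu (X 0 - Xb) (S 0) (I 0 - Ib) (A 0 - Ab) * exp (- kap * t)).
  { intros X S I A [HD [R1 [R2 [R3 R4]]]] H0.
    set (v := fun t => Vf e0 b0 eps kk mu (X t - Xb) (S t) (I t - Ib) (A t - Ab)).
    set (dv := fun t =>
      let x := X t - Xb in let s := S t in let i := I t - Ib in let y := A t - Ab in
      let dx := fX p (X t) (S t) (I t) (A t) in let ds := fS p (X t) (S t) (I t) (A t) in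
      let di := fI p (X t) (S t) (I t) (A t) in let dy := fA p (X t) (S t) (I t) (A t) in
      2*e0*x*dx + 2*b0*i*di + 2*eps*(dx*i + x*di) + 2*kk*s*ds + 2*mu*y*dy).
    intros t Ht.
    refine (proj2 (dyn v dv m kap Hkap _ _ _ _ H0 t Ht)).
    - intros t0 Ht0. destruct (HD t0 Ht0) as [D1 [D2 [D3 D4]]].
      unfold v, dv. exact (dV e0 b0 eps kk mu X S I A Xb Ib Ab t0 _ _ _ _ D1 D2 D3 D4).
    - unfold v. apply rc_V; try apply rc_sub; assumption.
    - intros t0 _. unfold v.
      destruct (V_bounds e0 b0 eps kk mu (X t0 - Xb) (S t0) (I t0 - Ib) (A t0 - Ab)) as [B1 _]; try lra.
      pose proof (pow2_ge_0 (X t0 - Xb)); pose proof (pow2_ge_0 (S t0)); pose proof (pow2_ge_0 (I t0 - Ib)); pose proof (pow2_ge_0 (A t0 - Ab)).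
      assert (0 <= lam * ((X t0 - Xb) ^ 2 + S t0 ^ 2 + (I t0 - Ib) ^ 2 + (A t0 - Ab) ^ 2)) by (apply Rmult_le_pos; lra).
      fold lam in B1. lra.
    - intros t0 Ht0 Hv. unfold v in Hv.
      set (x := X t0 - Xb) in *. set (s := S t0) in *. set (i := I t0 - Ib) in *. set (y := A t0 - Ab) in *.
      destruct (V_bounds e0 b0 eps kk mu x s i y) as [B1 B2]; try lra. fold lam in B1. fold Lam in B2.
      assert (Hss : x^2 + s^2 + i^2 + y^2 < rho^2).
      { apply Rmult_lt_reg_l with lam; [lra|]. unfold m in Hv. lra. }
      destruct (sq_le_ss x s i y) as [Q1 [Q2 [Q3 Q4]]].
      assert (Ax : Rabs x < rho) by (apply sq_lt_abs; lra).
      assert (Ai : Rabs i < rho) by (apply sq_lt_abs; lra).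
      assert (Ay : Rabs y < rho) by (apply sq_lt_abs; lra).
      destruct (Reg (X t0) (I t0) (A t0) Ax Ai Ay) as [PX [PA [[C1a C1b] [C2 [C3 [C4 [[C5a C5b] [[C6a C6b] C7]]]]]]]].
      unfold dv. cbv zeta.
      rewrite (fX_eq _ _ _ _ PX), fS_eq, (fI_eq _ _ _ _ PX), fA_eq.
      fold x s i y.
      assert (Eq : 2 * e0 * x * (A11f (X t0) * x - Bf (X t0) * i - Gf (X t0) * s) +
          2 * b0 * i * (I t0 * qf (X t0) * x + Lf (A t0) * s) +
          2 * eps * ((A11f (X t0) * x - Bf (X t0) * i - Gf (X t0) * s) * i + x * (I t0 * qf (X t0) * x + Lf (A t0) * s)) +
          2 * kk * s * ((h1f (X t0) - Lf (A t0) - d) * s) + 2 * mu * y * (sg * s + sg * i - et * y)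
          = Dq e0 b0 eps kk mu sg et (A11f (X t0)) (Bf (X t0)) (Gf (X t0)) (I t0 * qf (X t0)) (Lf (A t0))
              (h1f (X t0) - Lf (A t0) - d) x s i y) by (unfold Dq; ring).
      rewrite Eq.
      pose proof (core al0 b0 e0 be sg et al la eps tau mu kk (A11f (X t0)) (Bf (X t0)) (Gf (X t0))
         (I t0 * qf (X t0)) (Lf (A t0)) (h1f (X t0) - Lf (A t0) - d) x s i y
         Hal0 Hb0 He0 Hbe Hsg Het Hal Hla Heps Htau Hmu Hkk eps1 eps2' tau1 tau2 mu1 kk1) as Core.
      assert (Dle : Dq e0 b0 eps kk mu sg et (A11f (X t0)) (Bf (X t0)) (Gf (X t0)) (I t0 * qf (X t0)) (Lf (A t0))
              (h1f (X t0) - Lf (A t0) - d) x s i y <= - cd * (x^2 + s^2 + i^2 + y^2)).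
      { eapply Rle_trans; [apply Core|].
        - unfold al0; lra.
        - unfold b0; lra.
        - exact C3.
        - unfold e0; lra.
        - lra.
        - lra.
        - unfold be; lra.
        - assert (cd <= e0*al0/4) by (unfold cd; eapply Rle_trans; [apply Rmin_l|apply Rmin_l]).
          assert (cd <= eps*b0/4) by (unfold cd; eapply Rle_trans; [apply Rmin_l|apply Rmin_r]).
          assert (cd <= kk*be/2) by (unfold cd; eapply Rle_trans; [apply Rmin_r|apply Rmin_l]).
          assert (cd <= mu*et) by (unfold cd; eapply Rle_trans; [apply Rmin_r|apply Rmin_r]).
          pose proof (pow2_ge_0 x); pose proof (pow2_ge_0 s); pose proof (pow2_ge_0 i); pose proof (pow2_ge_0 y).
          assert (cd * x^2 <= e0*al0/4 * x^2) by (apply Rmult_le_compat_r; lra).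
          assert (cd * i^2 <= eps*b0/4 * i^2) by (apply Rmult_le_compat_r; lra).
          assert (cd * s^2 <= kk*be/2 * s^2) by (apply Rmult_le_compat_r; lra).
          assert (cd * y^2 <= mu*et * y^2) by (apply Rmult_le_compat_r; lra).
          lra. }
      assert (cd * (x^2 + s^2 + i^2 + y^2) >= kap * Vf e0 b0 eps kk mu x s i y).
      { unfold kap. apply Rle_ge.
        apply Rle_trans with (cd / Lam * (Lam * (x ^ 2 + s ^ 2 + i ^ 2 + y ^ 2))).
        - apply Rmult_le_compat_l; [left; pos|exact B2].
        - right. field. unfold Lam; lra. }
      change (v t0) with (Vf e0 b0 eps kk mu x s i y). lra. }
  set (delA := rho * lam / Lam).
  assert (HLam : 0 < Lam) by lra.
  assert (HdelA : 0 < delA) by (unfold delA; pos).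
  assert (VB : forall x s i y, lam * (x^2 + s^2 + i^2 + y^2) <= Vf e0 b0 eps kk mu x s i y /\
            Vf e0 b0 eps kk mu x s i y <= Lam * (x^2 + s^2 + i^2 + y^2)).
  { intros. apply V_bounds; lra. }
  assert (Init : forall X S I A dl, 0 < dl -> dist4 (X 0) (S 0) (I 0) (A 0) Xb 0 Ib Ab < dl ->
     Vf e0 b0 eps kk mu (X 0 - Xb) (S 0) (I 0 - Ib) (A 0 - Ab) < Lam * dl^2).
  { intros X S I A dl Hdl Hdist. unfold dist4 in Hdist. rewrite Rminus_0_r in Hdist.
    apply sqrt_lt_sq in Hdist; [|lra].
    destruct (VB (X 0 - Xb) (S 0) (I 0 - Ib) (A 0 - Ab)) as [_ U].
    assert (Lam * ((X 0 - Xb) ^ 2 + S 0 ^ 2 + (I 0 - Ib) ^ 2 + (A 0 - Ab) ^ 2) < Lam * dl^2)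
      by (apply Rmult_lt_compat_l; lra).
    lra. }
  assert (Dm : Lam * delA^2 <= m).
  { unfold delA, m. replace (Lam * (rho * lam / Lam) ^ 2) with (lam * rho^2 * (lam / Lam)) by (field; lra).
    rewrite <- (Rmult_1_r (lam * rho^2)) at 2. apply Rmult_le_compat_l.
    - apply Rmult_le_pos; [lra|apply pow2_ge_0].
    - apply Rmult_le_reg_r with Lam; [lra|]. unfold Rdiv; rewrite Rmult_assoc, Rinv_l; lra. }
  assert (Bound : forall X S I A, is_solution p X S I A -> dist4 (X 0) (S 0) (I 0) (A 0) Xb 0 Ib Ab < delA ->
     forall t, 0 <= t -> (X t - Xb)^2 + S t^2 + (I t - Ib)^2 + (A t - Ab)^2 <=
        Vf e0 b0 eps kk mu (X 0 - Xb) (S 0) (I 0 - Ib) (A 0 - Ab) / lam * exp (- kap * t)).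
  { intros X S I A Hsol Hdist t Ht.
    pose proof (Init X S I A delA HdelA Hdist) as I0.
    pose proof (Traj X S I A Hsol ltac:(lra) t Ht) as T0.
    destruct (VB (X t - Xb) (S t) (I t - Ib) (A t - Ab)) as [L _].
    apply Rmult_le_reg_l with lam; [lra|].
    replace (lam * (Vf e0 b0 eps kk mu (X 0 - Xb) (S 0) (I 0 - Ib) (A 0 - Ab) / lam * exp (- kap * t)))
      with (Vf e0 b0 eps kk mu (X 0 - Xb) (S 0) (I 0 - Ib) (A 0 - Ab) * exp (- kap * t)) by (field; lra).
    lra. }
  assert (V0pos : forall X S I A, 0 <= Vf e0 b0 eps kk mu (X 0 - Xb) (S 0) (I 0 - Ib) (A 0 - Ab)).
  { intros. destruct (VB (X 0 - Xb) (S 0) (I 0 - Ib) (A 0 - Ab)) as [L _].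
    pose proof (pow2_ge_0 (X 0 - Xb)); pose proof (pow2_ge_0 (S 0)); pose proof (pow2_ge_0 (I 0 - Ib)); pose proof (pow2_ge_0 (A 0 - Ab)).
    assert (0 <= lam * ((X 0 - Xb) ^ 2 + S 0 ^ 2 + (I 0 - Ib) ^ 2 + (A 0 - Ab) ^ 2)) by (apply Rmult_le_pos; lra).
    lra. }
  split.
  - intros eps0 Heps0.
    set (dl := Rmin delA (eps0 * lam / Lam)).
    assert (Hdl : 0 < dl) by (unfold dl; apply Rmin_glb_lt; pos).
    assert (dl1 : dl <= delA) by apply Rmin_l.
    assert (dl2 : dl <= eps0 * lam / Lam) by apply Rmin_r.
    exists dl; split; [exact Hdl|]. intros X S I A Hsol Hdist t Ht.
    assert (Hd2 : dist4 (X 0) (S 0) (I 0) (A 0) Xb 0 Ib Ab < delA) by lra.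
    pose proof (Bound X S I A Hsol Hd2 t Ht) as B.
    pose proof (Init X S I A dl Hdl Hdist) as I0.
    pose proof (V0pos X S I A) as P0.
    set (V0 := Vf e0 b0 eps kk mu (X 0 - Xb) (S 0) (I 0 - Ib) (A 0 - Ab)) in *.
    assert (exp (- kap * t) <= 1) by (rewrite <- exp_0; destruct (Req_dec t 0) as [->|]; [right; f_equal; ring|left; apply exp_increasing; nra]).
    assert (V0 / lam * exp (- kap * t) <= V0 / lam).
    { rewrite <- (Rmult_1_r (V0/lam)) at 2. apply Rmult_le_compat_l; [|lra].
      unfold Rdiv; apply Rmult_le_pos; [lra|left; apply Rinv_0_lt_compat; lra]. }
    assert (dl^2 <= (eps0 * lam / Lam)^2) by (apply pow_incr; lra).
    assert (Lam * (eps0 * lam / Lam)^2 / lam <= eps0^2).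
    { replace (Lam * (eps0 * lam / Lam)^2 / lam) with (eps0^2 * (lam / Lam)) by (field; lra).
      rewrite <- (Rmult_1_r (eps0^2)) at 2. apply Rmult_le_compat_l; [apply pow2_ge_0|].
      apply Rmult_le_reg_r with Lam; [lra|]. unfold Rdiv; rewrite Rmult_assoc, Rinv_l; lra. }
    assert (V0 / lam < Lam * (eps0 * lam / Lam)^2 / lam).
    { unfold Rdiv. apply Rmult_lt_compat_r; [apply Rinv_0_lt_compat; lra|].
      assert (Lam * dl^2 <= Lam * (eps0 * lam / Lam)^2) by (apply Rmult_le_compat_l; lra). lra. }
    unfold dist4. rewrite Rminus_0_r.
    rewrite <- (sqrt_pow2 eps0) by lra.
    apply sqrt_lt_1_alt. split.
    + pose proof (pow2_ge_0 (X t - Xb)); pose proof (pow2_ge_0 (S t)); pose proof (pow2_ge_0 (I t - Ib)); pose proof (pow2_ge_0 (A t - Ab)). lra.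
    + lra.
  - exists delA; split; [exact HdelA|]. intros X S I A Hsol Hdist.
    pose proof (Bound X S I A Hsol Hdist) as B.
    pose proof (V0pos X S I A) as P0.
    set (V0 := Vf e0 b0 eps kk mu (X 0 - Xb) (S 0) (I 0 - Ib) (A 0 - Ab)) in *.
    assert (HC : 0 <= V0 / lam) by (unfold Rdiv; apply Rmult_le_pos; [lra|left; apply Rinv_0_lt_compat; lra]).
    repeat split; eapply (lim_bound _ _ (V0 / lam) kap Hkap HC); intros t Ht; specialize (B t Ht);
      destruct (sq_le_ss (X t - Xb) (S t) (I t - Ib) (A t - Ab)) as [Q1 [Q2 [Q3 Q4]]];
      try rewrite Rminus_0_r; lra.
Qed.

End Model.

Theorem theorem4 (p : params) :
  0 < p_r p -> 0 < p_K p -> 0 < p_alpha p -> 0 < p_phi p -> 0 < p_c p ->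
  0 < p_m1 p -> 0 < p_m2 p -> 0 < p_lambda p -> 0 < p_a p -> 0 < p_d p ->
  0 < p_delta p -> 0 < p_gamma p -> 0 < p_sigma p -> 0 < p_eta p ->
  p_phi p < 1 -> p_m2 p < p_m1 p ->
  p_d p + p_delta p < p_m2 p * p_phi p * p_alpha p * p_K p / (p_c p + p_K p) ->
  p_m1 p * (p_d p + p_delta p) * (p_a p + Abar p) /
    ((p_a p + Abar p) * (p_lambda p + p_d p) - p_lambda p * p_a p)
    < p_m2 p * p_phi p ->
  p_m2 p * p_phi p < (p_K p + p_c p) * (p_d p + p_delta p) / (p_alpha p * (p_K p - p_c p)) ->
  loc_asymp_stable p (Xbar p) 0 (Ibar p) (Abar p).
Proof.
  intros. apply main; assumption.
Qed.
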